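(* (i) Let $p_{1}, p_{2}, r \in \mathbb N$ and $m \in \mathbb N_{0}$. Then \begin{align*} T(p_{1},p_{2},m,1,r,1) &=\sum_{i=1}^{m}\frac{(-1)^{m-i}}{r^{m-i+1}}S_{p_{1},p_{2},i}^{+,+,-} +\frac{(-1)^{m+r}}{r^{m}}\left(S_{p_{1},p_{2},1}^{+,+,-}-S_{p_{1},p_{2}+1}^{+,-}-S_{p_{2},p_{1}+1}^{+,-}\right) +\frac{(-1)^{m+r}}{r^{m}}\overline{\zeta}(p_{1}+p_{2}+1)\\ &\quad +\sum_{j=1}^{r-1}\frac{(-1)^{r+m-j}}{r^{m}}S(0,p_{1}+p_{2}+1,1,j,1) +\sum_{j=1}^{r-1}\frac{(-1)^{r+m-1-j}}{r^{m}}\big(S(p_{1},p_{2},1,j,1)+S(p_{2},p_{1},1,j,1)\big)\,. \end{align*} (ii) Let $p_{1}, m, r \in \mathbb N$, $p_{2} \in \mathbb N_{0}$ with $m \geq p_{2}+1$. Then \begin{align*} T(p_{1},-p_{2},m,1,r,1)=\frac{1}{p_{2}+1}\sum_{\ell=0}^{p_{2}} \binom{p_{2}+1}{\ell}B_{\ell}^{+}S(p_{1},m-p_{2}-1+\ell,1,r,1)\,. \end{align*} (iii) Let $m, r \in \mathbb N$, $p_{1}, p_{2} \in \mathbb N_{0}$ with $m \geq p_{1}+p_{2}+2$. Then \begin{align*} T(-p_{1},-p_{2},m,1,r,1)=\frac{1}{(p_{1}+1)(p_{2}+1)}\sum_{\ell_{1}=0}^{p_{1}} \sum_{\ell_{2}=0}^{p_{2}}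 \binom{p_{1}+1}{\ell_{1}}\binom{p_{2}+1}{\ell_{2}}B_{\ell_{1}}^{+}B_{\ell_{2}}^{+}\,S(0,m-p_{1}-p_{2}-1+\ell_{1}+\ell_{2},1,r,1)\,. \end{align*}
   Context: $H_n^{(q)}=\sum_{j=1}^n j^{-q}$ for $q\in\mathbb N$; for an integer $q\ge0$, $H_n^{(-q)}=\sum_{\ell=1}^n\ell^q$ (so $H_n^{(0)}=n$). For $q,q_1,q_2\in\mathbb Z$, $t,r\in\mathbb N$ and integer exponent $m\ge0$: $S(q,m,t,r,1):=\sum_{n=1}^\infty\frac{(-1)^{n+1}H_n^{(q)}}{n^{m}(n+r)^{t}}$ and $T(q_{1},q_{2},m,t,r,1):=\sum_{n=1}^\infty\frac{(-1)^{n+1}H_n^{(q_{1})}H_n^{(q_{2})}}{n^{m}(n+r)^{t}}$. $S_{p,q}^{+,-}:=\sum_{n\ge1}(-1)^{n-1}H_n^{(p)}/n^q$, $S_{p_1,p_2,q}^{+,+,-}:=\sum_{n\ge1}(-1)^{n-1}H_n^{(p_1)}H_n^{(p_2)}/n^q$, $\overline{\zeta}(s)=\sum_{n\ge1}(-1)^{n-1}n^{-s}$. Bernoulli numbers $B_j^{+}$: $\frac{x}{1-e^{-x}}=\sum_{j\ge0}B_j^{+}\frac{x^j}{j!}$. Empty sums are $0$. *)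

(* Defs.v *)
From Stdlib Require Import Reals Lra Lia ZArith List.
From Coquelicot Require Import Coquelicot.
Open Scope R_scope.

Definition H (q : Z) (n : nat) : R :=
  sum_n_m (fun j : nat => powerRZ (INR j) (- q)) 1 n.

(* Summands, indexed so that index k corresponds to n = k+1 (series start at n = 1);
   (-1)^{n+1} = (-1)^k. *)
Definition S_term (q : Z) (m t r : nat) (k : nat) : R :=
  (-1) ^ k * H q (S k) / (INR (S k) ^ m * (INR (S k) + INR r) ^ t).

Definition T_term (q1 q2 : Z) (m t r : nat) (k : nat) : R :=
  (-1) ^ k * H q1 (S k) * H q2 (S k) / (INR (S k) ^ m * (INR (S k) + INR r) ^ t).

Definition Ssum (q : Z) (m t r : nat) : R := Series (S_term q m t r).
Definition Tsum (q1 q2 : Z) (m t r : nat) : R := Series (T_term q1 q2 m t r).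

Definition Spm (p q : nat) : R :=
  Series (fun k => (-1) ^ k * H (Z.of_nat p) (S k) / INR (S k) ^ q).

Definition Sppm (p1 p2 q : nat) : R :=
  Series (fun k => (-1) ^ k * H (Z.of_nat p1) (S k) * H (Z.of_nat p2) (S k) / INR (S k) ^ q).

Definition zetabar (s : nat) : R :=
  Series (fun k => (-1) ^ k / INR (S k) ^ s).

(* Bernoulli numbers B_j^+ defined by x/(1-e^{-x}) = sum_j B_j^+ x^j/j!.
   Comparing coefficients in (x/(1-e^{-x})) * ((1-e^{-x})/x) = 1, with
   (1-e^{-x})/x = sum_k (-1)^k x^k/(k+1)!, gives for n >= 1:
     sum_{j=0}^{n} C(n+1,j) (-1)^{n-j} B_j^+ = 0,  B_0^+ = 1,
   i.e. B_n^+ = - (1/(n+1)) sum_{j<n} C(n+1,j) (-1)^{n-j} B_j^+. *)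
Fixpoint Bplus_list (n : nat) : list R :=
  match n with
  | O => 1 :: nil
  | S k =>
      let l := Bplus_list k in
      l ++ (- (sum_f_R0 (fun j => Binomial.C (S (S k)) j * (-1) ^ (S k - j) * nth j l 0) k)
             / INR (S (S k))) :: nil
  end.

Definition Bplus (n : nat) : R := nth n (Bplus_list n) 0.

(* Main.v *)
Require Import Defs.
From Stdlib Require Import Reals ZArith Lra Lia List.
From Coquelicot Require Import Coquelicot.
Open Scope R_scope.

Lemma H_0 q : H q 0 = 0.
Proof. unfold H. rewrite sum_n_m_zero; [reflexivity|lia]. Qed.

Lemma H_S q n : H q (S n) = H q n + powerRZ (INR (S n)) (- q).
Proof. unfold H. rewrite sum_n_Sm; [reflexivity|lia]. Qed.

Lemma Hp_S p n : H (Z.of_nat p) (S n) = H (Z.of_nat p) n + / INR (S n) ^ p.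
Proof. rewrite H_S, powerRZ_neg', <- pow_powerRZ. reflexivity. Qed.

Lemma Hn_S p n : H (- Z.of_nat p) (S n) = H (- Z.of_nat p) n + INR (S n) ^ p.
Proof. rewrite H_S, Z.opp_involutive, <- pow_powerRZ. reflexivity. Qed.

Lemma H0_eq n : H 0 n = INR n.
Proof.
  induction n. rewrite H_0; reflexivity.
  rewrite H_S, IHn. simpl (powerRZ _ _). rewrite (S_INR n). ring.
Qed.

Lemma INR_S_pos n : 0 < INR (S n).
Proof. apply lt_0_INR; lia. Qed.

Lemma INR_S_ge1 n : 1 <= INR (S n).
Proof. rewrite S_INR. pose proof (pos_INR n). lra. Qed.

Lemma pow_ge_self x p : 1 <= x -> (1 <= p)%nat -> x <= x ^ p.
Proof.
  intros Hx Hp. replace x with (x ^ 1) at 1 by ring. apply Rle_pow; auto.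
Qed.

Lemma inv_pow_le p n : (1 <= p)%nat -> 0 <= / INR (S n) ^ p <= / INR (S n).
Proof.
  intros Hp. pose proof (INR_S_pos n). split.
  - left. apply Rinv_0_lt_compat. apply pow_lt; auto.
  - apply Rinv_le_contravar; auto. apply pow_ge_self; auto. apply INR_S_ge1.
Qed.

Lemma Hp_nonneg p n : 0 <= H (Z.of_nat p) n.
Proof.
  induction n. rewrite H_0; lra. rewrite Hp_S.
  pose proof (INR_S_pos n).
  assert (0 < / INR (S n) ^ p) by (apply Rinv_0_lt_compat, pow_lt; auto). lra.
Qed.

Lemma Hp_ge1 p n : 1 <= H (Z.of_nat p) (S n).
Proof.
  induction n. rewrite Hp_S, H_0. simpl INR. rewrite pow1. lra.
  rewrite Hp_S. pose proof (INR_S_pos (S n)).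
  assert (0 < / INR (S (S n)) ^ p) by (apply Rinv_0_lt_compat, pow_lt; auto). lra.
Qed.

Lemma Hp_le_H1 p n : (1 <= p)%nat -> H (Z.of_nat p) n <= H (Z.of_nat 1) n.
Proof.
  intros Hp. induction n. rewrite !H_0; lra.
  rewrite !Hp_S. pose proof (inv_pow_le p n Hp). rewrite pow_1. lra.
Qed.

Definition H1 n := H (Z.of_nat 1) n.

Lemma H1_S n : H1 (S n) = H1 n + / INR (S n).
Proof. unfold H1. rewrite Hp_S, pow_1. reflexivity. Qed.

Lemma H1_quarter n : H1 n <= 4 * sqrt (sqrt (INR n)).
Proof.
  induction n.
  - unfold H1; rewrite H_0. simpl INR. rewrite sqrt_0, sqrt_0. lra.
  - rewrite H1_S.
    set (x := sqrt (sqrt (INR n))). set (y := sqrt (sqrt (INR (S n)))).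
    assert (Hx0 : 0 <= x) by apply sqrt_pos.
    assert (Hy0 : 0 <= y) by apply sqrt_pos.
    assert (Hx4 : x * x * (x * x) = INR n).
    { unfold x. rewrite sqrt_sqrt by apply sqrt_pos. rewrite sqrt_sqrt. auto. apply pos_INR. }
    assert (Hy4 : y * y * (y * y) = INR (S n)).
    { unfold y. rewrite sqrt_sqrt by apply sqrt_pos. rewrite sqrt_sqrt. auto. apply pos_INR. }
    rewrite S_INR in Hy4.
    assert (Hy1 : 1 <= y).
    { destruct (Rle_lt_dec 1 y); auto. exfalso. pose proof (pos_INR n).
      assert (y * y < 1) by nra. assert (y*y*(y*y) < 1) by nra. lra. }
    assert (Hxy : x <= y).
    { destruct (Rle_lt_dec x y); auto. exfalso. assert (y*y < x*x) by nra.
      assert (y*y*(y*y) < x*x*(x*x)) by nra. lra. }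
    assert (Hkey : 1 <= 4 * (y - x) * (y*y*y)).
    { assert (1 = (y - x) * ((y + x) * (y*y + x*x))) by nra.
      assert (y + x <= 2 * y) by lra. assert (y*y + x*x <= 2*(y*y)) by nra.
      assert ((y + x) * (y*y + x*x) <= (2*y) * (2*(y*y))).
      { apply Rmult_le_compat; nra. }
      assert ((y - x) * ((y + x) * (y*y + x*x)) <= (y-x) * ((2*y) * (2*(y*y)))).
      { apply Rmult_le_compat_l; lra. }
      lra. }
    assert (/ INR (S n) <= 4 * (y - x)).
    { rewrite S_INR, <- Hy4. apply (Rmult_le_reg_l (y*y*(y*y))). nra.
      rewrite Rinv_r by nra.
      assert (4*(y-x)*(y*y*y) <= y*y*(y*y)*(4*(y-x))) by nra. lra. }
    change (sqrt (sqrt (INR n))) with x in IHn. lra.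
Qed.

Lemma H1_ge1 n : 1 <= H1 (S n).
Proof. apply Hp_ge1. Qed.
Lemma H1_nonneg n : 0 <= H1 n.
Proof. apply Hp_nonneg. Qed.

Lemma H1_ratio k : H1 (S (S k)) / INR (S (S k)) <= H1 (S k) / INR (S k).
Proof.
  rewrite H1_S. pose proof (H1_ge1 k). set (h := H1 (S k)) in *.
  rewrite (S_INR (S k)). set (n := INR (S k)). assert (0 < n) by apply INR_S_pos.
  assert (E : h / n - (h + / (n + 1)) / (n + 1) = (h * (n+1) - n) / (n * (n+1) * (n+1))) by (field; lra).
  assert (0 <= (h * (n+1) - n) / (n * (n+1) * (n+1))).
  { apply Rdiv_le_0_compat. assert (0 <= (h - 1) * (n + 1)) by (apply Rmult_le_pos; lra). lra.
    apply Rmult_lt_0_compat; [apply Rmult_lt_0_compat|]; lra. }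
  lra.
Qed.

Lemma L2 N : sum_n (fun k => H1 (S k) / INR (S k) ^ 2) N + 2 * H1 (S N) / INR (S (S N)) + 2 / INR (S N) <= 4.
Proof.
  induction N.
  - rewrite sum_O. unfold H1. rewrite Hp_S, H_0. simpl. lra.
  - rewrite sum_Sn. change (plus ?a ?b) with (a + b).
    rewrite (H1_S (S N)).
    pose proof (H1_ge1 N). set (h := H1 (S N)) in *.
    rewrite (S_INR (S (S N))), (S_INR (S N)) in *.
    set (n := INR (S N)) in *. assert (0 < n) by apply INR_S_pos.
    set (s := sum_n _ N) in *.
    assert (E : s + (h + / (n + 1)) / (n + 1) ^ 2 + 2 * (h + / (n + 1)) / (n + 1 + 1) + 2 / (n + 1)
       = (s + 2 * h / (n + 1) + 2 / n) - (h + / (n+1)) * n / ((n+1)^2*(n+2)) - 2 / (n*(n+1)^2)).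
    { field. lra. }
    rewrite E.
    assert (0 <= (h + / (n+1)) * n / ((n+1)^2*(n+2))).
    { apply Rdiv_le_0_compat. apply Rmult_le_pos; [|lra]. assert (0 < / (n+1)) by (apply Rinv_0_lt_compat; lra). lra. nra. }
    assert (0 <= 2 / (n*(n+1)^2)).
    { apply Rdiv_le_0_compat. lra. nra. }
    lra.
Qed.

Lemma ex_series_pos_bound (a : nat -> R) (M : R) :
  (forall n, 0 <= a n) -> (forall n, sum_n a n <= M) -> ex_series a.
Proof.
  intros Hpos Hb.
  destruct (ex_finite_lim_seq_incr (sum_n a) M) as [l Hl].
  - intros n. rewrite sum_Sn. change (plus ?x ?y) with (x + y). pose proof (Hpos (S n)). lra.
  - exact Hb.
  - exists l. exact Hl.
Qed.

Lemma lim_inv_sqrt : is_lim_seq (fun n => 16 / sqrt (INR (S n))) 0.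
Proof.
  assert (H1l : is_lim_seq (fun n => / INR (S n)) 0).
  { apply (is_lim_seq_incr_1 (fun n => / INR n) 0).
    replace (Finite 0) with (Rbar_inv p_infty) by reflexivity.
    apply is_lim_seq_inv. apply is_lim_seq_INR. discriminate. }
  assert (H2l : is_lim_seq (fun n => sqrt (/ INR (S n))) (sqrt 0)).
  { apply is_lim_seq_continuous. apply continuity_pt_sqrt; lra. exact H1l. }
  rewrite sqrt_0 in H2l.
  replace (Finite 0) with (Rbar_mult 16 0) by (simpl; f_equal; ring).
  apply (is_lim_seq_ext (fun n => 16 * sqrt (/ INR (S n)))).
  - intros n. rewrite sqrt_inv. reflexivity.
  - apply is_lim_seq_scal_l. exact H2l.
Qed.

Lemma m1_pow_cases n : (-1) ^ n = 1 \/ (-1) ^ n = -1.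
Proof. induction n; simpl. auto. destruct IHn as [e|e]; rewrite e; [right|left]; ring. Qed.

Lemma sum_alt_bound n : Rabs (sum_n (fun k => (-1) ^ k) n) <= 1.
Proof.
  assert (E : sum_n (fun k => (-1) ^ k) n = (1 + (-1) ^ n) / 2).
  { induction n. rewrite sum_O. simpl. field.
    rewrite sum_Sn, IHn. change (plus ?x ?y) with (x + y). simpl. field. }
  rewrite E. destruct (m1_pow_cases n) as [e|e]; rewrite e.
  all: rewrite Rabs_right; lra.
Qed.

Lemma alt_conv (h b : nat -> R) :
  (forall k, 0 <= h k) -> (forall k, h k <= h (S k)) ->
  (forall k, h k <= H1 (S k) ^ 2) ->
  (forall k, h (S k) - h k <= 2 * H1 (S k) / INR (S k)) ->
  (forall k, 0 <= b (S k) <= b k) -> (forall k, b k <= / INR (S k)) ->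
  ex_series (fun k => (-1) ^ k * (h k * b k)).
Proof.
  intros Hh0 Hhm Hhb Hhi Hbm Hbb.
  assert (Hb0 : forall k, 0 <= b k).
  { intros [|k]. pose proof (Hbm 0%nat); lra. apply Hbm. }
  set (a := fun k => h k * b k).
  assert (Hs : ex_series (fun k => scal (a k) ((-1) ^ k))).
  { apply partial_summation_R.
    - exists 1. intros n. apply sum_alt_bound.
    - change (is_lim_seq a 0).
      apply (is_lim_seq_le_le (fun _ => 0) a (fun n => 16 / sqrt (INR (S n)))).
      3: apply lim_inv_sqrt. 2: apply is_lim_seq_const.
      intros n. unfold a. split. apply Rmult_le_pos; auto.
      pose proof (H1_quarter (S n)) as Hq. pose proof (H1_nonneg (S n)).
      pose proof (INR_S_pos n).
      set (m := INR (S n)) in *.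
      assert (Hs0 : 0 < sqrt m) by (apply sqrt_lt_R0; auto).
      assert (Hss : sqrt (sqrt m) * sqrt (sqrt m) = sqrt m) by (apply sqrt_sqrt; apply sqrt_pos).
      assert (Hsm : sqrt m * sqrt m = m) by (apply sqrt_sqrt; lra).
      assert (HH2 : H1 (S n) ^ 2 <= 16 * sqrt m).
      { assert (H1 (S n) * H1 (S n) <= (4 * sqrt (sqrt m)) * (4 * sqrt (sqrt m))).
        { apply Rmult_le_compat; auto. }
        simpl. nra. }
      apply Rle_trans with (H1 (S n) ^ 2 * / m).
      { apply Rmult_le_compat; auto. }
      apply Rle_trans with (16 * sqrt m * / m).
      { apply Rmult_le_compat_r; auto. left. apply Rinv_0_lt_compat; auto. }
      replace (/ m) with (/ (sqrt m * sqrt m)) by (rewrite Hsm; auto). right. field. lra.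
    - set (u := fun n => h n * (b n - b (S n))).
      set (v := fun n => (h (S n) - h n) * b (S n)).
      assert (Hu0 : forall n, 0 <= u n).
      { intros n; unfold u. apply Rmult_le_pos; auto. pose proof (Hbm n); lra. }
      assert (Hv0 : forall n, 0 <= v n).
      { intros n; unfold v. apply Rmult_le_pos; auto. pose proof (Hhm n); lra. }
      assert (Hvb : forall n, v n <= 2 * (H1 (S n) / INR (S n) ^ 2)).
      { intros n. unfold v. pose proof (INR_S_pos n).
        apply Rle_trans with (2 * H1 (S n) / INR (S n) * / INR (S n)).
        apply Rmult_le_compat. pose proof (Hhm n); lra. apply Hbm. apply Hhi.
        pose proof (Hbm n); pose proof (Hbb n); lra.
        right. field. lra. }
      assert (Hvs : ex_series v).
      { apply (ex_series_pos_bound v 8); auto. intros N.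
        apply Rle_trans with (sum_n (fun k => 2 * (H1 (S k) / INR (S k) ^ 2)) N).
        { unfold sum_n. apply sum_n_m_le. apply Hvb. }
        unfold sum_n. rewrite (sum_n_m_mult_l (K := R_Ring) 2).
        change (mult 2 ?x) with (2 * x). fold (sum_n (fun k => H1 (S k) / INR (S k) ^ 2) N).
        pose proof (L2 N). pose proof (H1_nonneg (S N)).
        assert (0 <= 2 * H1 (S N) / INR (S (S N))).
        { apply Rdiv_le_0_compat. lra. apply INR_S_pos. }
        assert (0 <= 2 / INR (S N)). { apply Rdiv_le_0_compat. lra. apply INR_S_pos. }
        match goal with |- 2 * ?s <= 8 => assert (E : s = sum_n (fun k => H1 (S k) / INR (S k) ^ 2) N) by reflexivity; rewrite E end. lra. }
      assert (Habel : forall N, sum_n u N + h (S N) * b (S N) = h 0%nat * b 0%nat + sum_n v N).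
      { induction N. rewrite !sum_O. unfold u, v. ring.
        rewrite !sum_Sn. change (plus ?x ?y) with (x + y). unfold u, v in *. lra. }
      assert (Hus : ex_series u).
      { destruct Hvs as [lv Hlv].
        apply (ex_series_pos_bound u (h 0%nat * b 0%nat + lv)); auto. intros N.
        pose proof (Habel N).
        assert (sum_n v N <= lv).
        { apply (is_lim_seq_incr_compare (sum_n v) lv). exact Hlv.
          intros n. rewrite sum_Sn. change (plus ?x ?y) with (x + y). pose proof (Hv0 (S n)). lra. }
        pose proof (Hh0 (S N)). pose proof (Hb0 (S N)).
        assert (0 <= h (S N) * b (S N)) by (apply Rmult_le_pos; auto). lra. }
      apply (@ex_series_le R_AbsRing R_CompleteNormedModule _ (fun n => u n + v n)).
      + intros n. change (norm (norm ?x)) with (Rabs (Rabs x)).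
        rewrite Rabs_Rabsolu. apply Rabs_le.
        change (minus ?x ?y) with (x - y). unfold a.
        assert (E : h (S n) * b (S n) - h n * b n = v n - u n) by (unfold u, v; ring).
        rewrite E. pose proof (Hu0 n); pose proof (Hv0 n). lra.
      + apply (ex_series_plus u v); auto. }
  revert Hs. apply ex_series_ext.
  intros k. change (@eq R (a k * (-1)^k) ((-1)^k * (h k * b k))). unfold a. ring.
Qed.

Lemma ex_series_ext_R (a b : nat -> R) : (forall n, a n = b n) -> ex_series a -> ex_series b.
Proof. apply ex_series_ext. Qed.

Definition bq (i t r : nat) (k : nat) : R := / (INR (S k) ^ i * (INR (S k) + INR r) ^ t).

Lemma bq_props i t r : (1 <= i + t)%nat ->
  (forall k, 0 <= bq i t r (S k) <= bq i t r k) /\ (forall k, bq i t r k <= / INR (S k)).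
Proof.
  intros Hit. unfold bq. pose proof (pos_INR r).
  split.
  - intros k. pose proof (INR_S_pos k). pose proof (INR_S_pos (S k)).
    assert (0 < INR (S k) ^ i * (INR (S k) + INR r) ^ t).
    { apply Rmult_lt_0_compat; apply pow_lt; lra. }
    split. left. apply Rinv_0_lt_compat. apply Rmult_lt_0_compat; apply pow_lt; lra.
    apply Rinv_le_contravar; auto.
    assert (INR (S k) <= INR (S (S k))) by (apply le_INR; lia).
    apply Rmult_le_compat; try (left; apply pow_lt; lra); apply pow_incr; lra.
  - intros k. pose proof (INR_S_pos k). pose proof (INR_S_ge1 k).
    apply Rinv_le_contravar; auto.
    destruct i as [|i].
    + rewrite pow_O, Rmult_1_l. apply Rle_trans with (INR (S k) + INR r). lra.
      apply pow_ge_self. lra. lia.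
    + apply Rle_trans with (INR (S k) ^ S i * 1).
      rewrite Rmult_1_r. apply pow_ge_self; auto. lia.
      apply Rmult_le_compat_l. left; apply pow_lt; lra.
      apply pow_R1_Rle. lra.
Qed.

Lemma Hp_Sdiff p k : (1 <= p)%nat ->
  H (Z.of_nat p) (S (S k)) = H (Z.of_nat p) (S k) + / INR (S (S k)) ^ p /\
  0 <= / INR (S (S k)) ^ p <= / INR (S (S k)).
Proof. intros. split. apply Hp_S. apply inv_pow_le; auto. Qed.

Lemma conv_HH p1 p2 i t r : (1 <= p1)%nat -> (1 <= p2)%nat -> (1 <= i + t)%nat ->
  ex_series (fun k => (-1) ^ k * H (Z.of_nat p1) (S k) * H (Z.of_nat p2) (S k)
                      / (INR (S k) ^ i * (INR (S k) + INR r) ^ t)).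
Proof.
  intros Hp1 Hp2 Hit. destruct (bq_props i t r Hit) as [Hb1 Hb2].
  assert (E : ex_series (fun k => (-1) ^ k * ((H (Z.of_nat p1) (S k) * H (Z.of_nat p2) (S k)) * bq i t r k))).
  2: { revert E. apply ex_series_ext_R. intros k. unfold bq. unfold Rdiv. ring. }
  apply alt_conv; auto.
  - intros k. apply Rmult_le_pos; apply Hp_nonneg.
  - intros k. rewrite (Hp_S p1 (S k)), (Hp_S p2 (S k)).
    pose proof (inv_pow_le p1 (S k) Hp1). pose proof (inv_pow_le p2 (S k) Hp2).
    apply Rmult_le_compat; try apply Hp_nonneg; lra.
  - intros k. simpl. rewrite Rmult_1_r. apply Rmult_le_compat; try apply Hp_nonneg; apply Hp_le_H1; auto.
  - intros k. destruct (Hp_Sdiff p1 k Hp1) as [E1 [a1 a2]]. destruct (Hp_Sdiff p2 k Hp2) as [E2 [b1 b2]].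
    rewrite E1, E2.
    set (A := H (Z.of_nat p1) (S k)) in *. set (B := H (Z.of_nat p2) (S k)) in *.
    set (al := / INR (S (S k)) ^ p1) in *. set (be := / INR (S (S k)) ^ p2) in *.
    set (w := / INR (S (S k))) in *.
    assert (HA : 0 <= A <= H1 (S k)) by (split; [apply Hp_nonneg | apply Hp_le_H1; auto]).
    assert (HB : 0 <= B + be <= H1 (S (S k))).
    { split. pose proof (Hp_nonneg p2 (S k)). fold B in H. lra.
      rewrite <- E2. apply Hp_le_H1; auto. }
    assert (E : (A + al) * (B + be) - A * B = al * (B + be) + A * be) by ring.
    rewrite E.
    assert (al * (B + be) <= w * H1 (S (S k))) by (apply Rmult_le_compat; lra).
    assert (A * be <= H1 (S k) * w) by (apply Rmult_le_compat; lra).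
    pose proof (H1_ratio k).
    assert (H1 (S k) * w <= H1 (S k) / INR (S k)).
    { unfold w. apply Rmult_le_compat_l. apply H1_nonneg.
      apply Rinv_le_contravar. apply INR_S_pos. apply le_INR; lia. }
    unfold w in *. unfold Rdiv in *. lra.
Qed.

Lemma conv_H p i t r : (1 <= p)%nat -> (1 <= i + t)%nat ->
  ex_series (fun k => (-1) ^ k * H (Z.of_nat p) (S k)
                      / (INR (S k) ^ i * (INR (S k) + INR r) ^ t)).
Proof.
  intros Hp Hit. destruct (bq_props i t r Hit) as [Hb1 Hb2].
  assert (E : ex_series (fun k => (-1) ^ k * (H (Z.of_nat p) (S k) * bq i t r k))).
  2: { revert E. apply ex_series_ext_R. intros k. unfold bq. unfold Rdiv. ring. }
  apply alt_conv; auto.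
  - intros k. apply Hp_nonneg.
  - intros k. rewrite (Hp_S p (S k)). pose proof (inv_pow_le p (S k) Hp). lra.
  - intros k. assert (X : H (Z.of_nat p) (S k) <= H1 (S k)) by (apply Hp_le_H1; auto).
    pose proof (H1_ge1 k).
    replace (H1 (S k) ^ 2) with (H1 (S k) * H1 (S k)) by ring. nra.
  - intros k. destruct (Hp_Sdiff p k Hp) as [E1 [a1 a2]]. rewrite E1.
    pose proof (H1_ge1 k). pose proof (INR_S_pos k).
    assert (/ INR (S (S k)) <= / INR (S k)).
    { apply Rinv_le_contravar. apply INR_S_pos. apply le_INR; lia. }
    assert (/ INR (S k) <= 2 * H1 (S k) / INR (S k)).
    { unfold Rdiv. assert (0 < / INR (S k)) by (apply Rinv_0_lt_compat; auto). nra. }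
    lra.
Qed.

Lemma conv_1 i t r : (1 <= i + t)%nat ->
  ex_series (fun k => (-1) ^ k / (INR (S k) ^ i * (INR (S k) + INR r) ^ t)).
Proof.
  intros Hit. destruct (bq_props i t r Hit) as [Hb1 Hb2].
  assert (E : ex_series (fun k => (-1) ^ k * (1 * bq i t r k))).
  2: { revert E. apply ex_series_ext_R. intros k. unfold bq. unfold Rdiv. ring. }
  apply alt_conv; auto.
  - intros k. lra.
  - intros k. lra.
  - intros k. pose proof (H1_ge1 k).
    replace (H1 (S k) ^ 2) with (H1 (S k) * H1 (S k)) by ring. nra.
  - intros k. pose proof (H1_ge1 k). pose proof (INR_S_pos k).
    assert (0 < / INR (S k)) by (apply Rinv_0_lt_compat; auto). unfold Rdiv. nra.
Qed.


Ltac toR := match goal with |- @eq _ ?a ?b => change (@eq R a b) end.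

Lemma Bplus_list_length n : length (Bplus_list n) = S n.
Proof. induction n. reflexivity. simpl. rewrite length_app, IHn. simpl. lia. Qed.

Lemma Bplus_list_nth n j : (j <= n)%nat -> nth j (Bplus_list n) 0 = Bplus j.
Proof.
  induction n; intros Hj.
  - assert (j = 0%nat) by lia. subst. reflexivity.
  - destruct (Nat.eq_dec j (S n)). subst. reflexivity.
    simpl. rewrite app_nth1. apply IHn. lia. rewrite Bplus_list_length. lia.
Qed.

Lemma Bplus_S k : Bplus (S k) =
  - (sum_f_R0 (fun j => Binomial.C (S (S k)) j * (-1) ^ (S k - j) * Bplus j) k) / INR (S (S k)).
Proof.
  unfold Bplus at 1. simpl Bplus_list. rewrite app_nth2; rewrite Bplus_list_length; [|lia].
  rewrite Nat.sub_diag. simpl nth. f_equal. f_equal. apply sum_eq. intros i Hi.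
  rewrite Bplus_list_nth; auto.
Qed.

Lemma C_S_n n : Binomial.C (S n) n = INR (S n).
Proof.
  unfold Binomial.C. replace (S n - n)%nat with 1%nat by lia.
  change (fact (S n)) with (S n * fact n)%nat. rewrite mult_INR. simpl (fact 1).
  pose proof (INR_fact_neq_0 n). simpl (INR 1). field. auto.
Qed.

Lemma Bern_id n : sum_n_m (fun j => Binomial.C (S n) j * (-1) ^ (n - j) * Bplus j) 0 n
  = if Nat.eqb n 0 then 1 else 0.
Proof.
  destruct n as [|k].
  - rewrite sum_n_n. toR. simpl. unfold Bplus. simpl. rewrite C_n_0. ring.
  - rewrite sum_n_Sm by lia. change (plus ?x ?y) with (x + y).
    change (sum_n_m ?a 0 k) with (sum_n a k). rewrite sum_n_Reals. rewrite C_S_n, Nat.sub_diag, Bplus_S.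
    toR. simpl Nat.eqb. rewrite pow_O. field. apply not_0_INR. lia.
Qed.

Lemma sumR_Sm (a : nat -> R) n m : (n <= S m)%nat -> sum_n_m a n (S m) = sum_n_m a n m + a (S m).
Proof. intros. rewrite sum_n_Sm; auto. Qed.
Lemma sumR_Sn (a : nat -> R) n m : (n <= m)%nat -> sum_n_m a n m = a n + sum_n_m a (S n) m.
Proof. intros. rewrite sum_Sn_m; auto. Qed.
Lemma sumR_n (a : nat -> R) n : sum_n_m a n n = a n.
Proof. apply sum_n_n. Qed.
Lemma sumR_plus (u v : nat -> R) n m : sum_n_m (fun k => u k + v k) n m = sum_n_m u n m + sum_n_m v n m.
Proof. apply (sum_n_m_plus (G := R_AbelianMonoid)). Qed.
Lemma sumR_mult_l (c : R) (u : nat -> R) n m : sum_n_m (fun k => c * u k) n m = c * sum_n_m u n m.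
Proof. apply (sum_n_m_mult_l (K := R_Ring)). Qed.
Lemma sumR_ext (a b : nat -> R) n m : (forall k, (n <= k <= m)%nat -> a k = b k) -> sum_n_m a n m = sum_n_m b n m.
Proof. apply sum_n_m_ext_loc. Qed.
Lemma sumR_zero (a : nat -> R) n m : (forall k, (n <= k <= m)%nat -> a k = 0) -> sum_n_m a n m = 0.
Proof. intros H. rewrite (sumR_ext a (fun _ => 0)); auto. apply (sum_n_m_const_zero (G := R_AbelianMonoid)). Qed.
Lemma sumR_chasles (a : nat -> R) n m k : (n <= S m)%nat -> (m <= k)%nat ->
  sum_n_m a n k = sum_n_m a n m + sum_n_m a (S m) k.
Proof. intros. rewrite (sum_n_m_Chasles a n m k); auto. Qed.
Lemma sumR_opp (v : nat -> R) n m : sum_n_m (fun k => - v k) n m = - sum_n_m v n m.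
Proof.
  replace (- sum_n_m v n m) with (-1 * sum_n_m v n m) by ring.
  rewrite <- sumR_mult_l. apply sumR_ext. intros. ring.
Qed.
Lemma sumR_minus (u v : nat -> R) n m : sum_n_m (fun k => u k - v k) n m = sum_n_m u n m - sum_n_m v n m.
Proof. unfold Rminus. rewrite sumR_plus, sumR_opp. reflexivity. Qed.

Lemma swap_sum (g : nat -> nat -> R) n m :
  sum_n_m (fun l => sum_n_m (fun i => g l i) 0 m) 0 n = sum_n_m (fun i => sum_n_m (fun l => g l i) 0 n) 0 m.
Proof.
  induction n.
  - rewrite sumR_n. apply sumR_ext. intros. rewrite sumR_n. reflexivity.
  - rewrite sumR_Sm by lia. rewrite IHn. rewrite <- sumR_plus. apply sumR_ext. intros.
    rewrite sumR_Sm by lia. reflexivity.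
Qed.

Lemma sumR_Reals (a : nat -> R) n : sum_n_m a 0 n = sum_f_R0 a n.
Proof. change (sum_n_m a 0 n) with (sum_n a n). apply sum_n_Reals. Qed.

Lemma diff_pow y e : y ^ (S e) - (y - 1) ^ (S e) =
  - sum_n_m (fun i => Binomial.C (S e) i * y ^ i * (-1) ^ (S e - i)) 0 e.
Proof.
  replace (y - 1) with (y + -1) by ring. rewrite binomial.
  change (sum_f_R0 ?f (S e)) with (sum_f_R0 f e + f (S e)).
  rewrite <- sumR_Reals. rewrite C_n_n, Nat.sub_diag. simpl (( -1) ^ 0). ring.
Qed.

Lemma C_swap p l i : (l + i <= p)%nat ->
  Binomial.C (S p) l * Binomial.C (S (p - l)) i = Binomial.C (S p) i * Binomial.C (S (p - i)) l.
Proof.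
  intros Hli. unfold Binomial.C.
  replace (S p - l)%nat with (S (p - l)) by lia. replace (S p - i)%nat with (S (p - i)) by lia.
  replace (S (p - i) - l)%nat with (S (p - l) - i)%nat by lia.
  pose proof (INR_fact_neq_0 l). pose proof (INR_fact_neq_0 i).
  pose proof (INR_fact_neq_0 (S (p - l))). pose proof (INR_fact_neq_0 (S (p - i))).
  pose proof (INR_fact_neq_0 (S (p - l) - i)).
  field. auto.
Qed.

Definition F (p : nat) (x : R) : R :=
  / INR (S p) * sum_n_m (fun l => Binomial.C (S p) l * Bplus l * x ^ (S p - l)) 0 p.

Lemma m1_pow_S e : (-1) ^ (S e) = - (-1) ^ e.
Proof. simpl. ring. Qed.

Lemma F_diff p y : F p y - F p (y - 1) = y ^ p.
Proof.
  unfold F. rewrite <- Rmult_minus_distr_l, <- sumR_minus.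
  set (g := fun l i => if Nat.leb i (p - l) then
      Binomial.C (S p) l * Bplus l * (Binomial.C (S (p - l)) i * y ^ i * (-1) ^ (S (p - l) - i)) else 0).
  rewrite (sumR_ext _ (fun l => - sum_n_m (fun i => g l i) 0 p)).
  2: { intros l Hl. replace (S p - l)%nat with (S (p - l)) by lia.
       rewrite <- Rmult_minus_distr_l, diff_pow.
       rewrite (sumR_chasles (fun i => g l i) 0 (p - l) p) by lia.
       rewrite (sumR_zero (fun i => g l i) (S (p - l)) p).
       2: { intros i Hi. unfold g. destruct (Nat.leb_spec i (p - l)). lia. reflexivity. }
       rewrite Rplus_0_r. rewrite <- Ropp_mult_distr_r, <- sumR_mult_l. f_equal.
       apply sumR_ext. intros i Hi. unfold g. destruct (Nat.leb_spec i (p - l)); [|lia]. ring. }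
  rewrite sumR_opp, swap_sum.
  rewrite (sumR_ext _ (fun i => - (Binomial.C (S p) i * y ^ i * (if Nat.eqb (p - i) 0 then 1 else 0)))).
  2: { intros i Hi. rewrite <- Bern_id.
       rewrite (sumR_chasles (fun l => g l i) 0 (p - i) p) by lia.
       rewrite (sumR_zero (fun l => g l i) (S (p - i)) p).
       2: { intros l Hl. unfold g. destruct (Nat.leb_spec i (p - l)). lia. reflexivity. }
       rewrite Rplus_0_r. rewrite <- sumR_mult_l, <- sumR_opp.
       apply sumR_ext. intros l Hl. unfold g. destruct (Nat.leb_spec i (p - l)); [|lia].
       replace (S (p - l) - i)%nat with (S (p - i - l)) by lia.
       replace (S (p - i))%nat with (S (p - i)) by lia.
       rewrite m1_pow_S.
       assert (Hc := C_swap p l i ltac:(lia)).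
       replace (Binomial.C (S p) l * Bplus l * (Binomial.C (S (p - l)) i * y ^ i * - (-1) ^ (p - i - l)))
         with (- ((Binomial.C (S p) l * Binomial.C (S (p - l)) i) * y ^ i * (-1) ^ (p - i - l) * Bplus l)) by ring.
       rewrite Hc. ring. }
  destruct p as [|p'].
  - rewrite sumR_n. simpl. rewrite C_n_0. field.
  - rewrite sumR_Sm by lia. rewrite sumR_zero.
    2: { intros i Hi. replace (Nat.eqb (S p' - i) 0) with false. ring.
         symmetry. apply Nat.eqb_neq. lia. }
    rewrite Nat.sub_diag. simpl Nat.eqb. rewrite C_S_n. field. apply not_0_INR. lia.
Qed.

Lemma H_S_neg p n : H (- Z.of_nat p) (S n) = H (- Z.of_nat p) n + INR (S n) ^ p.
Proof. unfold H. rewrite sum_n_Sm by lia. change (plus ?x ?y) with (x + y).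
  rewrite Z.opp_involutive, <- pow_powerRZ. reflexivity. Qed.

Lemma F_0 p : F p 0 = 0.
Proof.
  unfold F. rewrite sumR_zero. ring. intros l Hl. rewrite pow_i by lia. ring.
Qed.

Lemma Faulhaber p n : H (- Z.of_nat p) n = F p (INR n).
Proof.
  induction n.
  - unfold H. rewrite sum_n_m_zero by lia. simpl INR. rewrite F_0. reflexivity.
  - rewrite H_S_neg. rewrite IHn.
    pose proof (F_diff p (INR (S n))). rewrite S_INR in *.
    replace (INR n + 1 - 1) with (INR n) in H by ring. lra.
Qed.


Lemma sumR_mult_r (c : R) (u : nat -> R) n m : sum_n_m (fun k => u k * c) n m = sum_n_m u n m * c.
Proof. apply (sum_n_m_mult_r (K := R_Ring)). Qed.

Lemma is_series_zero : is_series (fun _ : nat => 0) 0.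
Proof.
  assert (Hl : is_lim_seq (sum_n (fun _ : nat => 0)) 0).
  { apply (is_lim_seq_ext (fun _ => 0)). intros n. symmetry.
    apply (sum_n_m_const_zero (G := R_AbelianMonoid)). apply is_lim_seq_const. }
  exact Hl.
Qed.

Lemma is_series_scal_R (c : R) (a : nat -> R) l : is_series a l -> is_series (fun k => c * a k) (c * l).
Proof. intros. apply (is_series_scal c a l). auto. Qed.

Lemma is_series_plus_R (a b : nat -> R) la lb : is_series a la -> is_series b lb ->
  is_series (fun k => a k + b k) (la + lb).
Proof. intros. apply (is_series_plus a b la lb); auto. Qed.

Lemma is_series_ext_R (a b : nat -> R) l : (forall n, a n = b n) -> is_series a l -> is_series b l.
Proof. apply is_series_ext. Qed.

Lemma is_series_sum_n_m (f : nat -> nat -> R) (l : nat -> R) a b :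
  (forall i, (a <= i <= b)%nat -> is_series (f i) (l i)) ->
  is_series (fun k => sum_n_m (fun i => f i k) a b) (sum_n_m l a b).
Proof.
  induction b; intros Hf.
  - destruct a.
    + rewrite sumR_n. apply (is_series_ext_R (f 0%nat)). intros; rewrite sumR_n; auto. apply Hf; lia.
    + rewrite sum_n_m_zero by lia. apply (is_series_ext_R (fun _ => 0)).
      intros. rewrite sum_n_m_zero by lia. reflexivity. apply is_series_zero.
  - destruct (le_lt_dec a (S b)).
    + rewrite sumR_Sm by lia. apply (is_series_ext_R (fun k => sum_n_m (fun i => f i k) a b + f (S b) k)).
      intros; rewrite sumR_Sm by lia; auto.
      apply is_series_plus_R. apply IHb. intros; apply Hf; lia. apply Hf; lia.
    + rewrite sum_n_m_zero by lia. apply (is_series_ext_R (fun _ => 0)).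
      intros. rewrite sum_n_m_zero by lia. reflexivity. apply is_series_zero.
Qed.

Lemma conv_S p q j : (1 <= p)%nat -> ex_series (S_term (Z.of_nat p) q 1 j).
Proof. intros. apply conv_H; auto. lia. Qed.

Lemma conv_S0 M j : (1 <= M)%nat -> ex_series (S_term 0 M 1 j).
Proof.
  intros HM. destruct M as [|M']. lia.
  apply (ex_series_ext_R (fun k => (-1) ^ k / (INR (S k) ^ M' * (INR (S k) + INR j) ^ 1))).
  2: apply conv_1; lia.
  intros k. unfold S_term. rewrite H0_eq. pose proof (INR_S_pos k). pose proof (pos_INR j).
  change (INR (S k) ^ S M') with (INR (S k) * INR (S k) ^ M'). field. repeat split; try apply pow_nonzero; lra.
Qed.

Lemma part2 : forall (p1 m r p2 : nat), (1 <= p1)%nat -> (1 <= m)%nat -> (1 <= r)%nat ->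
     (p2 + 1 <= m)%nat ->
     is_series (T_term (Z.of_nat p1) (- Z.of_nat p2) m 1 r)
       (/ INR (p2 + 1) *
        sum_n_m (fun l => Binomial.C (p2 + 1) l * Bplus l
                            * Ssum (Z.of_nat p1) (m - p2 - 1 + l) 1 r) 0 p2).
Proof.
  intros p1 m r p2 Hp1 Hm Hr Hpm. rewrite Nat.add_1_r.
  apply (is_series_ext_R (fun k => / INR (S p2) * sum_n_m (fun l => Binomial.C (S p2) l * Bplus l
             * S_term (Z.of_nat p1) (m - p2 - 1 + l) 1 r k) 0 p2)).
  2: { apply is_series_scal_R. apply is_series_sum_n_m. intros i Hi.
       apply is_series_scal_R. apply Series_correct. apply conv_S; auto. }
  intros k. unfold T_term, S_term. rewrite Faulhaber. unfold F.
  set (n := INR (S k)). assert (Hn : 0 < n) by apply INR_S_pos.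
  set (K := (-1) ^ k * H (Z.of_nat p1) (S k) / (n ^ m * (n + INR r) ^ 1)).
  rewrite (sumR_ext _ (fun l => Binomial.C (S p2) l * Bplus l * n ^ (S p2 - l) * K)).
  2: { intros l Hl. unfold K.
       replace (n ^ m) with (n ^ (S p2 - l) * n ^ (m - p2 - 1 + l)) by (rewrite <- pow_add; f_equal; lia).
       pose proof (pos_INR r). field. split. lra. split; apply pow_nonzero; lra. }
  rewrite sumR_mult_r. unfold K. unfold Rdiv. ring.
Qed.

Lemma part3 : forall (m r p1 p2 : nat), (1 <= m)%nat -> (1 <= r)%nat ->
     (p1 + p2 + 2 <= m)%nat ->
     is_series (T_term (- Z.of_nat p1) (- Z.of_nat p2) m 1 r)
       (/ (INR (p1 + 1) * INR (p2 + 1)) *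
        sum_n_m (fun l1 =>
          sum_n_m (fun l2 =>
             Binomial.C (p1 + 1) l1 * Binomial.C (p2 + 1) l2 * Bplus l1 * Bplus l2
             * Ssum 0 (m - p1 - p2 - 1 + l1 + l2) 1 r) 0 p2) 0 p1).
Proof.
  intros m r p1 p2 Hm Hr Hpm. rewrite !Nat.add_1_r.
  apply (is_series_ext_R (fun k => / (INR (S p1) * INR (S p2)) * sum_n_m (fun l1 => sum_n_m (fun l2 =>
             Binomial.C (S p1) l1 * Binomial.C (S p2) l2 * Bplus l1 * Bplus l2
             * S_term 0 (m - p1 - p2 - 1 + l1 + l2) 1 r k) 0 p2) 0 p1)).
  2: { apply is_series_scal_R. apply is_series_sum_n_m. intros i Hi.
       apply is_series_sum_n_m. intros j Hj.
       apply is_series_scal_R. apply Series_correct. apply conv_S0. lia. }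
  intros k. unfold T_term, S_term. rewrite !Faulhaber. unfold F.
  rewrite H0_eq.
  set (n := INR (S k)). assert (Hn : 0 < n) by apply INR_S_pos.
  set (K := (-1) ^ k / (n ^ m * (n + INR r) ^ 1)).
  rewrite (sumR_ext _ (fun l1 => (Binomial.C (S p1) l1 * Bplus l1 * n ^ (S p1 - l1)) *
      sum_n_m (fun l2 => Binomial.C (S p2) l2 * Bplus l2 * n ^ (S p2 - l2) * K) 0 p2)).
  2: { intros l1 Hl1. rewrite <- sumR_mult_l. apply sumR_ext. intros l2 Hl2. unfold K.
       assert (Epow : n ^ (S p1 - l1) * n ^ (S p2 - l2) * n ^ (m - p1 - p2 - 1 + l1 + l2) = n ^ m * n).
       { rewrite <- !pow_add. replace (n ^ m * n) with (n ^ (S m)) by (simpl; ring). f_equal. lia. }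
       replace (n ^ m) with (n ^ (S p1 - l1) * n ^ (S p2 - l2) * n ^ (m - p1 - p2 - 1 + l1 + l2) / n)
         by (rewrite Epow; field; lra).
       pose proof (pos_INR r). field. repeat split; try apply pow_nonzero; lra. }
  rewrite (sumR_ext _ (fun l1 => (Binomial.C (S p1) l1 * Bplus l1 * n ^ (S p1 - l1)) *
      (sum_n_m (fun l2 => Binomial.C (S p2) l2 * Bplus l2 * n ^ (S p2 - l2)) 0 p2 * K))).
  2: { intros l1 Hl1. rewrite sumR_mult_r. reflexivity. }
  rewrite sumR_mult_r. unfold K. unfold Rdiv. pose proof (pos_INR p1). pose proof (pos_INR p2).
  rewrite Rinv_mult. ring.
Qed.


Lemma sumR_empty (a : nat -> R) n m : (m < n)%nat -> sum_n_m a n m = 0.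
Proof. intros. rewrite sum_n_m_zero; auto. Qed.


Definition uterm (p1 p2 : nat) (r : nat) (k : nat) : R :=
  (-1) ^ k * H (Z.of_nat p1) (S k) * H (Z.of_nat p2) (S k) / (INR (S k) ^ 0 * (INR (S k) + INR r) ^ 1).

Lemma uterm_ex p1 p2 r : (1 <= p1)%nat -> (1 <= p2)%nat -> ex_series (uterm p1 p2 r).
Proof. intros. apply conv_HH; auto. Qed.

Definition U p1 p2 r := Series (uterm p1 p2 r).

Lemma Sppm_ex p1 p2 i : (1 <= p1)%nat -> (1 <= p2)%nat -> (1 <= i)%nat -> ex_series (fun k => (-1) ^ k * H (Z.of_nat p1) (S k) * H (Z.of_nat p2) (S k) / INR (S k) ^ i).
Proof.
  intros Hp1 Hp2 Hi. apply (ex_series_ext_R (fun k => (-1) ^ k * H (Z.of_nat p1) (S k) * H (Z.of_nat p2) (S k)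
     / (INR (S k) ^ i * (INR (S k) + INR 0) ^ 0))).
  intros k. simpl (_ ^ 0). rewrite Rmult_1_r. reflexivity.
  apply conv_HH; auto. lia.
Qed.

Lemma U_rec p1 p2 j : (1 <= p1)%nat -> (1 <= p2)%nat -> U p1 p2 (S j) = Ssum (Z.of_nat p1) p2 1 j + Ssum (Z.of_nat p2) p1 1 j
                          - Ssum 0 (p1 + p2 + 1) 1 j - U p1 p2 j.
Proof.
  intros Hp1 Hp2.
  set (g := fun k => - ((-1) ^ k * H (Z.of_nat p1) k * H (Z.of_nat p2) k / (INR k + INR (S j)))).
  assert (Eg : forall k, g (S k) = uterm p1 p2 (S j) k).
  { intros k. unfold g, uterm. rewrite pow_O, Rmult_1_l, pow_1. simpl ((-1) ^ S k). field.
    pose proof (pos_INR (S j)). pose proof (INR_S_pos k). lra. }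
  assert (Hg0 : g 0%nat = 0). { unfold g. rewrite H_0. unfold Rdiv. ring. }
  assert (HgS : Series g = U p1 p2 (S j)).
  { rewrite Series_incr_1_aux by auto. apply Series_ext. apply Eg. }
  assert (Hgex : ex_series g).
  { apply ex_series_incr_1. apply (ex_series_ext_R (uterm p1 p2 (S j))). intros; symmetry; apply Eg. apply uterm_ex; auto. }
  assert (Hsum : Series (fun k => uterm p1 p2 j k + g k) =
     Series (fun k => S_term (Z.of_nat p1) p2 1 j k + S_term (Z.of_nat p2) p1 1 j k - S_term 0 (p1 + p2 + 1) 1 j k)).
  { apply Series_ext. intros k. unfold uterm, g, S_term.
    rewrite !Hp_S, H0_eq. rewrite (S_INR j).
    pose proof (INR_S_pos k) as Hk. pose proof (pos_INR j).
    replace (p1 + p2 + 1)%nat with (S (p1 + p2)) by lia.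
    change (INR (S k) ^ S (p1 + p2)) with (INR (S k) * INR (S k) ^ (p1 + p2)).
    rewrite pow_add. rewrite (S_INR k) in *.
    field. repeat split; try apply pow_nonzero; lra. }
  rewrite Series_plus in Hsum by (first [exact Hgex | apply uterm_ex; auto]).
  rewrite Series_minus in Hsum.
  2: { apply (ex_series_plus (V := R_NormedModule)); apply conv_S; auto. }
  2: { apply conv_S0. lia. }
  rewrite Series_plus in Hsum by (apply conv_S; auto).
  rewrite <- HgS. unfold U, Ssum. lra.
Qed.


Lemma U_0 p1 p2 : U p1 p2 0 = Sppm p1 p2 1.
Proof.
  unfold U, Sppm. apply Series_ext. intros k. unfold uterm. simpl (INR 0).
  rewrite pow_O, Rplus_0_r, Rmult_1_l. reflexivity.
Qed.

Lemma S_0_eq p q : Ssum (Z.of_nat p) q 1 0 = Spm p (q + 1).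
Proof.
  unfold Ssum, Spm. apply Series_ext. intros k. unfold S_term. simpl (INR 0).
  rewrite Rplus_0_r, pow_1, pow_add, pow_1. reflexivity.
Qed.

Lemma S0_0_eq s : Ssum 0 s 1 0 = zetabar s.
Proof.
  unfold Ssum, zetabar. apply Series_ext. intros k. unfold S_term. simpl (INR 0).
  rewrite H0_eq, Rplus_0_r, pow_1. pose proof (INR_S_pos k).
  field. repeat split; try apply pow_nonzero; lra.
Qed.

Definition X0 p1 p2 := Sppm p1 p2 1 - Spm p1 (p2 + 1) - Spm p2 (p1 + 1) + zetabar (p1 + p2 + 1).
Definition S12 p1 p2 j := Ssum (Z.of_nat p1) p2 1 j + Ssum (Z.of_nat p2) p1 1 j.
Definition S00 p1 p2 j := Ssum 0 (p1 + p2 + 1) 1 j.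

Lemma U_closed p1 p2 q : (1 <= p1)%nat -> (1 <= p2)%nat -> U p1 p2 (S q) = (-1) ^ (S q) * X0 p1 p2
   + sum_n_m (fun j => (-1) ^ (S q - j) * S00 p1 p2 j) 1 q
   + sum_n_m (fun j => (-1) ^ (S q - 1 - j) * S12 p1 p2 j) 1 q.
Proof.
  intros Hp1 Hp2. induction q.
  - rewrite U_rec, U_0 by auto. rewrite !sumR_empty by lia. unfold X0.
    rewrite !S_0_eq, S0_0_eq. simpl. ring.
  - rewrite U_rec, IHq by auto. rewrite !sumR_Sm by lia.
    rewrite (sumR_ext (fun j => (-1) ^ (S (S q) - j) * S00 p1 p2 j) (fun j => - ((-1) ^ (S q - j) * S00 p1 p2 j))).
    2: { intros j Hj. replace (S (S q) - j)%nat with (S (S q - j)) by lia. simpl. ring. }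
    rewrite (sumR_ext (fun j => (-1) ^ (S (S q) - 1 - j) * S12 p1 p2 j) (fun j => - ((-1) ^ (S q - 1 - j) * S12 p1 p2 j))).
    2: { intros j Hj. replace (S (S q) - 1 - j)%nat with (S (S q - 1 - j)) by lia. simpl. ring. }
    rewrite !sumR_opp. replace (S (S q) - S q)%nat with 1%nat by lia.
    replace (S (S q) - 1 - S q)%nat with 0%nat by lia. unfold S12, S00. simpl. ring.
Qed.


Lemma PF (n r : R) m : 0 < n -> 0 < r ->
  / (n ^ m * (n + r) ^ 1) = sum_n_m (fun i => (-1) ^ (m - i) / r ^ (m - i + 1) * / n ^ i) 1 m
     + (-1) ^ m / r ^ m * / (n ^ 0 * (n + r) ^ 1).
Proof.
  intros Hn Hr. induction m.
  - rewrite sumR_empty by lia. simpl. field. lra.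
  - rewrite sumR_Sm by lia.
    rewrite (sumR_ext _ (fun i => - / r * ((-1) ^ (m - i) / r ^ (m - i + 1) * / n ^ i))).
    2: { intros i Hi. replace (S m - i)%nat with (S (m - i)) by lia. simpl. field.
         repeat split; try apply pow_nonzero; lra. }
    rewrite sumR_mult_l.
    assert (Key : / (n ^ S m * (n + r) ^ 1) = / r * / n ^ S m - / r * / (n ^ m * (n + r) ^ 1)).
    { simpl. field. repeat split; try apply pow_nonzero; lra. }
    rewrite Key, IHm. rewrite Nat.sub_diag. simpl. field. repeat split; try apply pow_nonzero; lra.
Qed.

Lemma PF' (X n r : R) m : 0 < n -> 0 < r ->
  X / (n ^ m * (n + r) ^ 1) = sum_n_m (fun i => (-1) ^ (m - i) / r ^ (m - i + 1) * (X / n ^ i)) 1 m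
     + (-1) ^ m / r ^ m * (X / (n ^ 0 * (n + r) ^ 1)).
Proof.
  intros Hn Hr.
  rewrite (sumR_ext _ (fun i => X * ((-1) ^ (m - i) / r ^ (m - i + 1) * / n ^ i))).
  2: { intros. unfold Rdiv. ring. }
  rewrite sumR_mult_l.
  transitivity (X * / (n ^ m * (n + r) ^ 1)). reflexivity.
  rewrite (PF n r m Hn Hr). unfold Rdiv. ring.
Qed.

Lemma part1 : forall (p1 p2 r m : nat), (1 <= p1)%nat -> (1 <= p2)%nat -> (1 <= r)%nat ->
     is_series (T_term (Z.of_nat p1) (Z.of_nat p2) m 1 r)
       ( sum_n_m (fun i => (-1) ^ (m - i) / INR r ^ (m - i + 1) * Sppm p1 p2 i) 1 m
       + (-1) ^ (m + r) / INR r ^ m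
           * (Sppm p1 p2 1 - Spm p1 (p2 + 1) - Spm p2 (p1 + 1))
       + (-1) ^ (m + r) / INR r ^ m * zetabar (p1 + p2 + 1)
       + sum_n_m (fun j => (-1) ^ (r + m - j) / INR r ^ m
                             * Ssum 0 (p1 + p2 + 1) 1 j) 1 (r - 1)
       + sum_n_m (fun j => (-1) ^ (r + m - 1 - j) / INR r ^ m
                             * (Ssum (Z.of_nat p1) p2 1 j + Ssum (Z.of_nat p2) p1 1 j))
                 1 (r - 1) ).
Proof.
  intros p1 p2 r m Hp1 Hp2 Hr.
  assert (HT : is_series (T_term (Z.of_nat p1) (Z.of_nat p2) m 1 r)
     (sum_n_m (fun i => (-1) ^ (m - i) / INR r ^ (m - i + 1) * Sppm p1 p2 i) 1 m
      + (-1) ^ m / INR r ^ m * U p1 p2 r)).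
  { apply (is_series_ext_R (fun k => sum_n_m (fun i => (-1) ^ (m - i) / INR r ^ (m - i + 1) *
        ((-1) ^ k * H (Z.of_nat p1) (S k) * H (Z.of_nat p2) (S k) / INR (S k) ^ i)) 1 m
        + (-1) ^ m / INR r ^ m * uterm p1 p2 r k)).
    - intros k. unfold T_term, uterm. symmetry. apply PF'. apply INR_S_pos. apply lt_0_INR; lia.
    - apply is_series_plus_R.
      + apply is_series_sum_n_m. intros i Hi. apply is_series_scal_R.
        apply Series_correct. apply Sppm_ex; auto. lia.
      + apply is_series_scal_R. apply Series_correct. apply uterm_ex; auto. }
  destruct r as [|q]. lia.
  rewrite U_closed in HT by auto.
  match goal with |- is_series _ ?v => replace v with
     (sum_n_m (fun i => (-1) ^ (m - i) / INR (S q) ^ (m - i + 1) * Sppm p1 p2 i) 1 m +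
      (-1) ^ m / INR (S q) ^ m *
      ((-1) ^ S q * X0 p1 p2 + sum_n_m (fun j => (-1) ^ (S q - j) * S00 p1 p2 j) 1 q +
       sum_n_m (fun j => (-1) ^ (S q - 1 - j) * S12 p1 p2 j) 1 q)) end.
  exact HT.
  replace (S q - 1)%nat with q by lia.
  rewrite (sumR_ext (fun j => (-1) ^ (S q + m - j) / INR (S q) ^ m * Ssum 0 (p1 + p2 + 1) 1 j)
     (fun j => (-1) ^ m / INR (S q) ^ m * ((-1) ^ (S q - j) * S00 p1 p2 j))).
  2: { intros j Hj. unfold S00. replace (S q + m - j)%nat with (m + (S q - j))%nat by lia.
       rewrite pow_add. unfold Rdiv. ring. }
  rewrite (sumR_ext (fun j => (-1) ^ (S q + m - 1 - j) / INR (S q) ^ m *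
        (Ssum (Z.of_nat p1) p2 1 j + Ssum (Z.of_nat p2) p1 1 j))
     (fun j => (-1) ^ m / INR (S q) ^ m * ((-1) ^ (q - j) * S12 p1 p2 j))).
  2: { intros j Hj. unfold S12. replace (S q + m - 1 - j)%nat with (m + (q - j))%nat by lia.
       rewrite pow_add. unfold Rdiv. ring. }
  rewrite !sumR_mult_l. rewrite pow_add. unfold X0. lra.
Qed.


Theorem lemma10 :
  (* (i) *)
  (forall (p1 p2 r m : nat), (1 <= p1)%nat -> (1 <= p2)%nat -> (1 <= r)%nat ->
     is_series (T_term (Z.of_nat p1) (Z.of_nat p2) m 1 r)
       ( sum_n_m (fun i => (-1) ^ (m - i) / INR r ^ (m - i + 1) * Sppm p1 p2 i) 1 m
       + (-1) ^ (m + r) / INR r ^ m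
           * (Sppm p1 p2 1 - Spm p1 (p2 + 1) - Spm p2 (p1 + 1))
       + (-1) ^ (m + r) / INR r ^ m * zetabar (p1 + p2 + 1)
       + sum_n_m (fun j => (-1) ^ (r + m - j) / INR r ^ m
                             * Ssum 0 (p1 + p2 + 1) 1 j) 1 (r - 1)
       + sum_n_m (fun j => (-1) ^ (r + m - 1 - j) / INR r ^ m
                             * (Ssum (Z.of_nat p1) p2 1 j + Ssum (Z.of_nat p2) p1 1 j))
                 1 (r - 1) ))
  /\
  (* (ii) *)
  (forall (p1 m r p2 : nat), (1 <= p1)%nat -> (1 <= m)%nat -> (1 <= r)%nat ->
     (p2 + 1 <= m)%nat ->
     is_series (T_term (Z.of_nat p1) (- Z.of_nat p2) m 1 r)
       (/ INR (p2 + 1) *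
        sum_n_m (fun l => Binomial.C (p2 + 1) l * Bplus l
                            * Ssum (Z.of_nat p1) (m - p2 - 1 + l) 1 r) 0 p2))
  /\
  (* (iii) *)
  (forall (m r p1 p2 : nat), (1 <= m)%nat -> (1 <= r)%nat ->
     (p1 + p2 + 2 <= m)%nat ->
     is_series (T_term (- Z.of_nat p1) (- Z.of_nat p2) m 1 r)
       (/ (INR (p1 + 1) * INR (p2 + 1)) *
        sum_n_m (fun l1 =>
          sum_n_m (fun l2 =>
             Binomial.C (p1 + 1) l1 * Binomial.C (p2 + 1) l2 * Bplus l1 * Bplus l2
             * Ssum 0 (m - p1 - p2 - 1 + l1 + l2) 1 r) 0 p2) 0 p1)).
Proof.
  split; [exact part1 | split; [exact part2 | exact part3]].
Qed.
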